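(* Let $q\geq 23$. If $(x_0,x_1,x_2)$ is a state of nonnegative integers with $wt_q(x_0,x_1,x_2)=2^q$ and $x_2\geq q^2$, then Paul has a strategy (a choice of legal questions depending on Carole's previous answers) such that, whatever Carole answers, after exactly $q$ rounds the state $\vec{z}$ satisfies $wt_0(\vec{z})=1$, and every intermediate state $(u_0,u_1,u_2)$ reached after playing $q-j$ rounds satisfies $wt_j(u_0,u_1,u_2)=2^j$.
   Context: Liar game with $2$ lies: a state is $\vec{x}=(x_0,x_1,x_2)$ of nonnegative integers; in each round Paul chooses a legal question $\vec{a}=(a_0,a_1,a_2)$ with integers $0\leq a_i\leq x_i$, and Carole answers Y or N; the next state is $(a_0,\,a_1+x_0-a_0,\,a_2+x_1-a_1)$ after Y, or $(x_0-a_0,\,x_1-a_1+a_0,\,x_2-a_2+a_1)$ after N. Weight: $wt_j(x_0,x_1,x_2)=x_0\binom{j}{\leq 2}+x_1\binom{j}{\leq 1}+x_2$, with $\binom{j}{\leq m}=\sum_{i=0}^m\binom{j}{i}$ (so $wt_0(\vec{z})=z_0+z_1+z_2$). *)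

(* Defs.v *)
From mathcomp Require Import all_boot.
Set Implicit Arguments. Unset Strict Implicit. Unset Printing Implicit Defensive.

Definition state := (nat * nat * nat)%type.

Definition s0 (x : state) : nat := x.1.1.
Definition s1 (x : state) : nat := x.1.2.
Definition s2 (x : state) : nat := x.2.

Definition binom_le (j m : nat) : nat := \sum_(i < m.+1) 'C(j, i).

Definition wt (j : nat) (x : state) : nat :=
  s0 x * binom_le j 2 + s1 x * binom_le j 1 + s2 x.

Definition legal (x a : state) : Prop :=
  s0 a <= s0 x /\ s1 a <= s1 x /\ s2 a <= s2 x.

Definition yes_state (x a : state) : state :=
  (s0 a, s1 a + (s0 x - s0 a), s2 a + (s1 x - s1 a)).

Definition no_state (x a : state) : state :=
  (s0 x - s0 a, s1 x - s1 a + s0 a, s2 x - s2 a + s1 a).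

Fixpoint perfect (j : nat) (x : state) : Prop :=
  match j with
  | 0 => wt 0 x = 1
  | j'.+1 => wt j x = 2 ^ j /\
      exists a : state, legal x a /\
        perfect j' (yes_state x a) /\ perfect j' (no_state x a)
  end.

(* Main.v *)
Require Import Defs.
From mathcomp Require Import all_boot.
From mathcomp Require Import zify.

Lemma bl2 j : binom_le j 2 = 1 + j + 'C(j,2).
Proof. by rewrite /binom_le !big_ord_recr big_ord0 /= bin0 bin1 add0n. Qed.
Lemma bl1 j : binom_le j 1 = 1 + j.
Proof. by rewrite /binom_le !big_ord_recr big_ord0 /= bin0 bin1 add0n. Qed.
Lemma wtE j y0 y1 y2 : wt j (y0,y1,y2) = y0 * (1 + j + 'C(j,2)) + y1 * (1 + j) + y2.
Proof. by rewrite /wt bl2 bl1. Qed.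
Lemma binS2 k : 'C(k.+1,2) = 'C(k,2) + k.
Proof. by rewrite binS bin1. Qed.
Lemma bin2E k : 2 * 'C(k,2) + k = k * k.
Proof.
elim: k => [|k IH]; first by [].
rewrite binS2 mulnDr. lia.
Qed.

Lemma pow_bound k : 12 <= k -> 3*(k*(k*k)) + 14*(k*k) + 12*k < 2 * 2^k.
Proof.
move=> H; rewrite -(subnK H); elim: (k - 12) => [|n IH]; first by [].
rewrite addSn expnS. set m := n + 12 in IH *. 
have : 12 <= m by rewrite /m; lia.
move=> Hm. nia.
Qed.

Lemma or_auto k y0 y1 y2 : 9 <= k -> wt k (y0,y1,y2) = 2^k ->
  277 * y0 < 2^k + 277 -> y0 <= y1 + 1 -> 3 * k <= y1 \/ k ^ 2 <= y2.
Proof.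
move=> Hk; rewrite wtE => Hw H0 H01.
have HT := bin2E k. set T := 'C(k,2) in Hw HT.
case: (leqP (3*k) y1) => h1; first by left.
case: (leqP (k^2) y2) => h2; first by right.
exfalso.
move: h2; rewrite expnS expn1 => h2.
case: (ltnP k 12) => Hk12.
- have : k = 9 \/ k = 10 \/ k = 11 by lia.
  case=> [Ek|[Ek|Ek]]; subst k; move: Hw H0 HT h1 h2.
  + by rewrite (_ : 2 ^ 9 = 512) // => *; lia.
  + by rewrite (_ : 2 ^ 10 = 1024) // => *; lia.
  + by rewrite (_ : 2 ^ 11 = 2048) // => *; lia.
- have B := pow_bound _ Hk12.
  have e1 : y0 * (1 + k + T) <= 3*k * (1 + k + T) by apply: leq_mul; lia.
  have e2 : y1 * (1 + k) <= 3*k * (1 + k) by apply: leq_mul; lia.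
  have e3 : k * (2 * T + k) = k * (k * k) by rewrite HT.
  lia.
Qed.

Definition wtc (j : nat) (x : state) : nat :=
  s0 x * (1 + j + 'C(j,2)) + s1 x * (1 + j) + s2 x.
Lemma wt_wtc j x : wt j x = wtc j x.
Proof. by rewrite /wt /wtc bl2 bl1. Qed.

Fixpoint exn (n : nat) (p : nat -> bool) : bool :=
  match n with 0 => false | n'.+1 => if p n' then true else exn n' p end.
Arguments exn : simpl never.
Lemma exnP n p : exn n p -> exists2 i, i < n & p i.
Proof.
elim: n => [|n IH] //. rewrite /exn -/exn. case E: (p n) => H.
- by exists n.
- by case: (IH H) => i Hi Hp; exists i => //; apply: ltnW.
Qed.

Definition cand (j : nat) (x : state) (a0 a1 : nat) : state :=
  (a0, a1, 2 ^ j - (a0 * (1 + j + 'C(j,2)) + (a1 + (s0 x - a0)) * (1 + j) + (s1 x - a1))).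

Arguments cand : simpl never.
Fixpoint perfb (j : nat) (x : state) : bool :=
  match j with
  | 0 => wtc 0 x == 1
  | j'.+1 => if wtc j x == 2 ^ j then
      exn (s0 x).+1 (fun a0 => exn (s1 x).+1 (fun a1 =>
        let a := cand j' x a0 a1 in
        if s2 a <= s2 x then
          (if perfb j' (yes_state x a) then perfb j' (no_state x a) else false)
        else false))
      else false
  end.

Lemma perfbP j x : perfb j x -> perfect j x.
Proof.
elim: j x => [|j IH] x /=; first by rewrite wt_wtc; move/eqP.
case: eqP => // Hw; rewrite -wt_wtc in Hw.
move=> H; have [a0 Ha0 H'] := exnP _ _ H; have [a1 Ha1 {}H'] := exnP _ _ H'; move: H'.
case: ifP => // H2. case: ifP => // HY HN.
split=> //; exists (cand j x a0 a1); split; last by split; apply: IH.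
by rewrite /legal /=; split; [|split].
Qed.

Definition base_check : bool :=
  all (fun x0 => all (fun x1 =>
     let x2 := 256 - x0 * 37 - x1 * 9 in
     (16 <= x2) ==> perfb 8 (x0, x1, x2)) (iota 0 29)) (iota 0 2).

Lemma base_check_ok : base_check.
Proof. vm_compute. reflexivity. Qed.

Definition Inv (j : nat) (x : state) : Prop :=
  wt j x = 2 ^ j /\ 277 * s0 x < 2 ^ j + 277 /\ 2 * j <= s2 x /\
  (9 <= j -> 3 * j <= s1 x \/ j ^ 2 <= s2 x).

Lemma child_ok k y0 y1 y2 : 8 <= k -> wt k (y0,y1,y2) = 2^k ->
  277 * y0 < 2^k + 277 -> 2 * k <= y2 -> y0 <= y1 + 1 -> Inv k (y0,y1,y2).
Proof.
move=> Hk Hw H0 H2 H01; split=> //; split=> //; split=> // H9.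
exact: (or_auto _ _ _ _ H9 Hw H0 H01).
Qed.

Lemma base x0 x1 x2 : Inv 8 (x0,x1,x2) -> perfect 8 (x0,x1,x2).
Proof.
case=> Hw [H0 [H2 _]]; apply: perfbP.
rewrite /s0 /s1 /s2 /= wtE (_ : 'C(8,2) = 28) // (_ : 2 ^ 8 = 256) // in Hw H0 H2.
have Hx0 : x0 < 2 by lia.
have Hx1 : x1 < 29 by lia.
have E : x2 = 256 - x0 * 37 - x1 * 9 by lia.
have B0 := base_check_ok. move/allP in B0.
have m0 : x0 \in iota 0 2 by rewrite mem_iota add0n Hx0.
have B1 := B0 x0 m0. move/allP in B1.
have m1 : x1 \in iota 0 29 by rewrite mem_iota add0n Hx1.
have B2 := B1 x1 m1. cbv beta zeta in B2. rewrite -E in B2.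
move/implyP in B2. exact: (B2 H2).
Qed.

Lemma stepB k x0 x1 x2 h0 f u :
  8 <= k ->
  x0 * (1 + k.+1 + ('C(k,2) + k)) + x1 * (1 + k.+1) + x2 = 2 * 2 ^ k ->
  277 * x0 < 2 * 2 ^ k + 277 ->
  x0 = 2 * h0 + 1 -> x1 = f + 2 * u ->
  f * k <= x2 + 'C(k,2) -> 'C(k,2) <= x2 + f * k ->
  4 * k + f * (k+1) <= x1 + x2 + 'C(k,2) ->
  4 * k + 'C(k,2) <= x1 + x2 + f * (k+1) ->
  exists a, legal (x0,x1,x2) a /\ Inv k (yes_state (x0,x1,x2) a) /\ Inv k (no_state (x0,x1,x2) a).
Proof.
move=> Hk Hw H0 E0 E1 I1 I2 I3 I4.
set T := 'C(k,2) in Hw I1 I2 I3 I4. set P := 2 ^ k in Hw H0.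
set W := h0 * (1 + k + T) + (f + u + h0 + 1) * (1 + k) + u.
have HW : 2 * W + (x2 + T - f * k) = 2 * P by rewrite /W; lia.
exists (h0, f + u, P - W).
rewrite /legal /yes_state /no_state /s0 /s1 /s2 /=.
have -> : x0 - h0 = h0 + 1 by lia.
have -> : x1 - (f + u) = u by lia.
split; first by split; [lia|split; lia].
split; apply: child_ok => //; rewrite ?wtE -/T -/P; lia.
Qed.

Lemma stepA k x0 x1 x2 h0 h1 (e1 : bool) :
  8 <= k ->
  x0 * (1 + k.+1 + ('C(k,2) + k)) + x1 * (1 + k.+1) + x2 = 2 * 2 ^ k ->
  277 * x0 < 2 * 2 ^ k + 277 ->
  x0 = 2 * h0 -> x1 = e1 + 2 * h1 ->
  e1 * k <= x2 -> 4 * k + e1 * (k+1) <= x1 + x2 ->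
  exists a, legal (x0,x1,x2) a /\ Inv k (yes_state (x0,x1,x2) a) /\ Inv k (no_state (x0,x1,x2) a).
Proof.
move=> Hk Hw H0 E0 E1 I1 I2.
set T := 'C(k,2) in Hw. set P := 2 ^ k in Hw H0.
case: e1 E1 I1 I2 => /= E1 I1 I2.
- set W := h0 * (1 + k + T) + (h1 + h0) * (1 + k) + h1 + 1.
  have HW : 2 * W + (x2 + k) = 2 * P by rewrite /W; lia.
  exists (h0, h1, P - W).
  rewrite /legal /yes_state /no_state /s0 /s1 /s2 /=.
  have -> : x0 - h0 = h0 by lia.
  have -> : x1 - h1 = h1 + 1 by lia.
  split; first by split; [lia|split; lia].
  split; apply: child_ok => //; rewrite ?wtE -/T -/P; lia.
- set W := h0 * (1 + k + T) + (h1 + h0) * (1 + k) + h1.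
  have HW : 2 * W + x2 = 2 * P by rewrite /W; lia.
  exists (h0, h1, P - W).
  rewrite /legal /yes_state /no_state /s0 /s1 /s2 /=.
  have -> : x0 - h0 = h0 by lia.
  have -> : x1 - h1 = h1 by lia.
  split; first by split; [lia|split; lia].
  split; apply: child_ok => //; rewrite ?wtE -/T -/P; lia.
Qed.

Lemma half_dec n : n = odd n + 2 * n./2.
Proof. by rewrite mul2n -[n in LHS]odd_double_half. Qed.

Lemma step k x0 x1 x2 : 8 <= k -> Inv k.+1 (x0,x1,x2) ->
  exists a, legal (x0,x1,x2) a /\ Inv k (yes_state (x0,x1,x2) a) /\ Inv k (no_state (x0,x1,x2) a).
Proof.
move=> Hk; rewrite /Inv /s0 /s1 /s2 /= wtE binS2 expnS.
case=> Hw [H0 [H2 /(_ (Hk : 9 <= k.+1)) HOR]].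
have HT := bin2E k. set T := 'C(k,2) in Hw HT *.
move: HOR; rewrite expnS expn1 => HOR.
have Hkk : 8 * k <= k * k by apply: leq_mul.
have E0 := half_dec x0. set h0 := x0./2 in E0.
have E1 := half_dec x1. set h1 := x1./2 in E1.
case O0: (odd x0) E0 => /= E0.
-
  rewrite add1n -addn1 in E0.
  set g0 := T %/ (k+1). set r := T %% (k+1).
  have Er : T = g0 * (k+1) + r by rewrite /g0 /r -divn_eq.
  have Hr : r < k + 1 by rewrite /r ltn_pmod // addn1.
  have Hg : g0 <= k.
    case: (leqP g0 k) => // Hg.
    have : (k+1) * (k+1) <= g0 * (k+1) by apply: leq_mul; lia.
    lia.
  case: (leqP (g0 + 1) x1) => Hx1.
  + have Ep := half_dec (x1 - g0).
    case Og: (odd (x1 - g0)) Ep => /= Ep.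
    *
      have Ep' := half_dec (x1 - (g0 + 1)).
      have Od : odd (x1 - (g0 + 1)) = false.
        have -> : x1 - (g0 + 1) = (x1 - g0).-1 by lia.
        move: Og; case: (x1 - g0) => //= n; by case: (odd n).
      rewrite Od /= in Ep'.
      apply: (stepB _ _ _ _ _ (g0 + 1) ((x1 - (g0 + 1))./2) Hk Hw H0 E0); lia.
    * apply: (stepB _ _ _ _ _ g0 ((x1 - g0)./2) Hk Hw H0 E0); lia.
  + have Hx2 : (k+1) * (k+1) <= x2 by lia.
    have Hm : x1 * k <= g0 * k by apply: leq_mul; lia.
    apply: (stepB _ _ _ _ _ x1 0 Hk Hw H0 E0); lia.
- apply: (stepA _ _ _ _ _ h1 (odd x1) Hk Hw H0 E0 E1);
  case: (odd x1) => /=; lia.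
Qed.

Lemma inv_perfect k x : 8 <= k -> Inv k x -> perfect k x.
Proof.
elim: k x => [|k IH] [[x0 x1] x2] Hk Hinv; first by [].
case: (ltngtP k 7) => Hk7; [lia| |].
- have [a [Hl [HY HN]]] := step _ _ _ _ Hk7 Hinv.
  split; first by case: Hinv.
  exists a; split=> //; split; apply: IH => //.
- subst k. exact: base.
Qed.

Theorem lemma16 (q x0 x1 x2 : nat) :
  23 <= q ->
  wt q (x0, x1, x2) = 2 ^ q ->
  q ^ 2 <= x2 ->
  perfect q (x0, x1, x2).
Proof.
move=> Hq Hw Hx2.
apply: inv_perfect; first by apply: leq_trans Hq.
have HT := bin2E q.
have Hqq : 23 * q <= q * q by apply: leq_mul.
move: Hx2; rewrite expnS expn1 => Hx2.
have Hw' := Hw; rewrite wtE in Hw'.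
have Hc : 277 <= 1 + q + 'C(q,2) by lia.
have Hm : x0 * 277 <= x0 * (1 + q + 'C(q,2)) by apply: leq_mul.
split=> //; rewrite /s0 /s1 /s2 /=; split; first by lia.
split; first by lia.
by move=> _; right; rewrite expnS expn1.
Qed.
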